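(* Let $i,j,k,s$ be distinct jobs such that $(i,k)$, $(j,k)$, $(s,i)$ and $(s,j)$ are all red pairs. Then, in the schedule produced by $1$-SORT, $D(i,j)\le\left(1+\frac{1}{\nu(\mu+1)}\right)D^*(i,j)$.
   Context: Setting: single machine, jobs $J=\{1,\dots,n\}$, each job $j$ with test time $t_j\ge0$ and processing time $p_j\ge0$ (revealed only when the test is executed); each job's test must be executed before its processing part, which may start any time after the test; operations are non-preemptive and the machine does one at a time. $\sigma_j=t_j+p_j$, $m_j=\max\{t_j,p_j\}$. Standing assumption (general position): no two of the $3n$ numbers $t_j,p_j,\sigma_j$ are equal. Algorithm $1$-SORT: keep a priority queue of available operations, initially the test of every job $j$ with priority $t_j$; repeatedly remove a minimum-priority operation and execute it immediately; after executing the test of $j$, insert the processing part of $j$ with priority $p_j$. For distinct jobs $j,k$, let $d_{k,j}$ be the total amount of time during which operations of $k$ are executed before the completion time of $j$, and $D(j,k)=d_{j,k}+d_{k,j}$, evaluated for the $1$-SORT schedule; $D^*(j,k)=\min\{\sigma_j,\sigma_k\}$. Fix constants $\mu>1$ and $0<\nu<1$ with $\mu\nu>1$ and $1+\frac1\mu\le\nu+\nu^2$. A job $j$ is imbalanced if $m_j\ge\mu\min\{t_j,p_j\}$. For distinct jobs $j,k$, the ordered pair $(j,k)$ is a red pair if $j$ is imbalanced, $m_j\ge t_k\ge\nu m_j$, and $p_k\ge\nu t_k$. *)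

(* Defs.v *)
From mathcomp Require Import all_boot all_order all_algebra.
Set Implicit Arguments. Unset Strict Implicit. Unset Printing Implicit Defensive.
Import Order.TTheory GRing.Theory Num.Theory.
Local Open Scope ring_scope.

Section OneSort.
Variables (R : realFieldType) (n : nat) (t p : 'I_n -> R).

Definition sigma (j : 'I_n) : R := t j + p j.
Definition mj (j : 'I_n) : R := Num.max (t j) (p j).

(* An operation: (j, false) is the test of j, (j, true) its processing part. *)
Definition op := ('I_n * bool)%type.
Definition olen (o : op) : R := if o.2 then p o.1 else t o.1.
Definition prio (o : op) : R := olen o.

(* minimum-priority element of a :: s (first one in case of ties,
   which cannot occur under general position) *)
Definition pickmin (a : op) (s : seq op) : op :=
  foldl (fun b y => if prio y < prio b then y else b) a s.

Fixpoint sort1 (fuel : nat) (avail : seq op) : seq op :=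
  match fuel with
  | 0%N => [::]
  | fuel'.+1 =>
    match avail with
    | [::] => [::]
    | a :: rest =>
      let m := pickmin a rest in
      m :: sort1 fuel' (rem m avail ++ (if m.2 then [::] else [:: (m.1, true)]))
    end
  end.

(* the 1-SORT schedule: the sequence of operations in execution order
   (executed back to back from time 0, no idle time) *)
Definition schedule : seq op :=
  sort1 (2 * n) [seq (j, false) | j <- enum 'I_n].

(* d_{k,j}: total time during which operations of k are executed before the
   completion time of j (= completion of the processing part of j). *)
Definition dd (k j : 'I_n) : R :=
  \sum_(o <- take (index (j, true) schedule).+1 schedule | o.1 == k) olen o.

Definition DD (j k : 'I_n) : R := dd j k + dd k j.
Definition Dstar (j k : 'I_n) : R := Num.min (sigma j) (sigma k).

(* general position: the 3n numbers t_j, p_j, sigma_j are pairwise distinct *)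
Definition val3 (j : 'I_n) (a : 'I_3) : R :=
  if val a == 0%N then t j else if val a == 1%N then p j else sigma j.
Definition general_position : Prop :=
  forall (j k : 'I_n) (a b : 'I_3), (j, a) != (k, b) -> val3 j a != val3 k b.

Variables (mu nu : R).
Definition imbalanced (j : 'I_n) : Prop :=
  mu * Num.min (t j) (p j) <= mj j.
Definition red_pair (j k : 'I_n) : Prop :=
  [/\ j != k, imbalanced j, nu * mj j <= t k, t k <= mj j & nu * t k <= p k].

End OneSort.

(* Main.v *)
Require Import Defs.
From mathcomp Require Import all_boot all_order all_algebra.
From mathcomp Require Import zify lra.
Import Order.TTheory GRing.Theory Num.Theory.
Local Open Scope ring_scope.
Set Implicit Arguments. Unset Strict Implicit.

Section Sched.
Variables (R : realFieldType) (n : nat) (t p : 'I_n -> R).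
Local Notation prio := (prio t p).
Local Notation pickmin := (pickmin t p).
Local Notation sort1 := (sort1 t p).

Lemma pickminP a s : pickmin a s \in a :: s /\
  forall z, z \in a :: s -> prio (pickmin a s) <= prio z.
Proof.
elim: s a => [|y s IH] a.
  by split; [rewrite inE eqxx | move=> z; rewrite inE => /eqP ->].
rewrite /Defs.pickmin /=; rewrite -/(Defs.pickmin t p _ s).
set b := if prio y < prio a then y else a.
have [Hm Hmin] := IH b.
have Hb : prio b <= prio a /\ prio b <= prio y.
  rewrite /b; case: ifP => H; split => //; first exact: ltW.
  by rewrite leNgt H.
split.
  move: Hm; rewrite !inE => /orP [/eqP ->|->]; last by rewrite !orbT.
  by rewrite /b; case: ifP => _; rewrite eqxx ?orbT.
move=> z; rewrite !inE => /orP [/eqP ->|/orP [/eqP ->|Hz]].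
- apply: le_trans (Hmin b _) _; first by rewrite inE eqxx. by case: Hb.
- apply: le_trans (Hmin b _) _; first by rewrite inE eqxx. by case: Hb.
- by apply: Hmin; rewrite inE Hz orbT.
Qed.

Lemma sort1S f a rest : sort1 f.+1 (a :: rest) =
  pickmin a rest :: sort1 f (rem (pickmin a rest) (a :: rest) ++
     (if (pickmin a rest).2 then [::] else [:: ((pickmin a rest).1, true)])).
Proof. by []. Qed.

Lemma before f avail (x y : op n) :
  (x \in avail \/ [/\ x.2, (x.1, false) \in avail & t x.1 < prio y]) ->
  prio x < prio y -> y \in sort1 f avail ->
  x \in take (index y (sort1 f avail)) (sort1 f avail).
Proof.
elim: f avail => [|f IH] [|a rest] // Hx Hxy; rewrite sort1S.
have [Hm Hmin] := pickminP a rest.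
set m := pickmin a rest in Hm Hmin *.
have Hmy : prio m < prio y.
  case: Hx => [Hx|[_ Hx Ht]].
    by apply: le_lt_trans (Hmin _ Hx) Hxy.
  by apply: le_lt_trans (Hmin _ Hx) Ht.
have Nmy : m != y by apply/eqP => E; move: Hmy; rewrite E ltxx.
set sch := sort1 f _.
rewrite inE eq_sym (negbTE Nmy) /= => Hy.
rewrite (negbTE Nmy).
rewrite [take _ _]/= inE.
case: eqVneq => [//|Nxm] /=.
apply: IH => //.
case: Hx => [Hx|[Hx2 Hx Ht]].
  by left; rewrite mem_cat rem_mem.
case: (eqVneq (x.1, false) m) => [E|N].
  left; rewrite mem_cat -E /= inE; apply/orP; right.
  by case: x Hx2 {Hxy Hy Nxm Hx Ht E} => /= c [].
by right; split => //; rewrite mem_cat rem_mem.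
Qed.

Definition w (s : seq (op n)) := (\sum_(o <- s) (if o.2 then 1 else 2))%N.

Lemma complete f avail : (w avail <= f)%N -> forall x : op n,
  (x \in avail -> x \in sort1 f avail) /\
  (x \in avail -> ~~ x.2 -> (x.1, true) \in sort1 f avail).
Proof.
elim: f avail => [|f IH] [|a rest] //.
  by rewrite /w big_cons; case: (a.2).
rewrite sort1S.
have [Hm _] := pickminP a rest.
set m := pickmin a rest in Hm *.
move=> Hw.
have Hw' : (w (rem m (a :: rest) ++ (if m.2 then [::] else [:: (m.1, true)])) <= f)%N.
  move: Hw; rewrite /w big_cat (perm_big _ (perm_to_rem Hm)) big_cons.
  set r := rem m _.
  by case: (m.2); rewrite ?big_nil ?big_cons ?big_nil /=; set S := \sum_(_ <- r) _; rewrite -/S; lia.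
move=> x; have Hsub : x != m -> x \in a :: rest ->
   x \in rem m (a :: rest) ++ (if m.2 then [::] else [:: (m.1, true)]).
  by move=> N H; rewrite mem_cat rem_mem.
split.
  move=> Hx; rewrite inE; case: eqVneq => //= N.
  by apply: (proj1 (IH _ Hw' x)); apply: Hsub.
move=> Hx Hx2; rewrite inE; case: eqVneq => [//|N] /=.
case: (eqVneq x m) => [E|N2].
  apply: (proj1 (IH _ Hw' _)); rewrite mem_cat -E (negbTE Hx2) inE eqxx orbT //.
by apply: (proj2 (IH _ Hw' x)) => //; apply: Hsub.
Qed.

Definition Inv (avail : seq (op n)) :=
  uniq avail /\ forall c, ~~ (((c, false) \in avail) && ((c, true) \in avail)).

Lemma uniqS f avail : Inv avail -> uniq (sort1 f avail) /\
  forall y, y \in sort1 f avail -> y \in avail \/ (y.2 /\ (y.1, false) \in avail).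
Proof.
elim: f avail => [|f IH] [|a rest] // [Hu Hd]; rewrite sort1S.
have [Hm _] := pickminP a rest.
set m := pickmin a rest in Hm *.
set av := a :: rest in Hu Hd Hm *.
set r := rem m av.
have Hr1 : forall y, y \in r -> y \in av by move=> y; apply: mem_rem.
have Hr2 : uniq r by apply: rem_uniq.
have Hr3 : m \in r = false by apply: mem_rem_uniqF.
have Hr4 : forall y, y != m -> y \in av -> y \in r by move=> y; apply: rem_mem.
clearbody r.
set av' := r ++ (if m.2 then [::] else [:: (m.1, true)]).
have Hinv : Inv av'.
  split.
    rewrite /av' cat_uniq Hr2 /=; case Em: (m.2) => //=.
    rewrite andbT orbF; apply/negP => /Hr1 H.
    have := Hd m.1; rewrite H andbT; move/negP; apply.
    by move: Hm; case: (m) Em => c [].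
  move=> c; apply/negP => /andP [].
  rewrite /av' !mem_cat; case Em: (m.2) => /=; rewrite ?orbF.
    move=> /Hr1 H1 /Hr1 H2; have := Hd c; by rewrite H1 H2.
  move=> /orP [H1|]; last by rewrite inE => /eqP [].
  move=> /orP [/Hr1 H2|]; first by have := Hd c; rewrite (Hr1 _ H1) H2.
  rewrite inE => /eqP [Ec]; move: H1; rewrite Ec; move: Hr3.
  by case: (m) Em => c' [] //= _ ->.
have [IHu IHm] := IH _ Hinv.
split.
  rewrite /= IHu andbT; apply/negP => /IHm [].
    rewrite /av' mem_cat Hr3 /=; case Em: (m.2) => //.
    by rewrite inE; move: Em; case: (m) => c [] // _ /eqP [].
  case=> Em; rewrite /av' Em /= cats0 => /Hr1 H.
  move: (Hd m.1); rewrite H /=; move/negP; apply.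
  by move: Hm; case: (m) Em => c [].
move=> y; rewrite inE => /orP [/eqP ->|/IHm]; first by left.
case=> [|[Hy2]].
  rewrite /av' mem_cat => /orP [/Hr1|]; first by left.
  case Em: (m.2) => //; rewrite inE => /eqP Ey.
  by right; rewrite Ey /=; split => //; move: Hm; case: (m) Em => c [].
rewrite /av' mem_cat => /orP [/Hr1|]; first by right.
by case: (m.2) => //; rewrite inE => /eqP [].
Qed.


Lemma dd_eq (P : seq (op n)) c : uniq P ->
  \sum_(o <- P | o.1 == c) olen t p o =
  (if (c, false) \in P then t c else 0) + (if (c, true) \in P then p c else 0).
Proof.
move=> UP; rewrite -big_filter.
rewrite (perm_big [seq o <- [:: (c, false); (c, true)] | o \in P]); last first.
  apply: uniq_perm; rewrite ?filter_uniq //.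
    by rewrite /= inE xpair_eqE andbF.
  move=> [d b]; rewrite !mem_filter !inE /= !xpair_eqE.
  by case: b; case: (d =P c) => [->|]; rewrite //= ?andbT ?andbF ?orbF.
rewrite /=; case: ifP => _; case: ifP => _;
  rewrite ?big_cons ?big_nil /olen /= ?addr0 ?add0r //.
Qed.

Lemma w_init (s : seq 'I_n) : w [seq (j, false) | j <- s] = (2 * size s)%N.
Proof.
elim: s => [|a s IH]; first by rewrite /w big_nil.
by rewrite /= /w big_cons /= -/(w _) IH; lia.
Qed.

Lemma key (i j : 'I_n) : (forall j, 0 <= t j) -> (forall j, 0 <= p j) ->
  t i <= p i -> p i < p j -> DD t p i j <= t i + p i + t j.
Proof.
move=> Ht Hp Htp Hpij.
rewrite /DD /dd /schedule.
set F := (X in sort1 X _).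
have EF : F = (2 * n)%N by [].
set avail0 := [seq (j, false) | j <- enum 'I_n].
have HI : Inv avail0.
  split; first by rewrite map_inj_uniq ?enum_uniq // => a b [].
  by move=> c; apply/negP => /andP [_ /mapP [x _ []]].
have [US _] := uniqS F HI.
have Hw : (w avail0 <= F)%N by rewrite EF w_init size_enum_ord.
have Hin c : (c, true) \in sort1 F avail0.
  apply: (proj2 (complete Hw (c, false))) => //.
  by apply/mapP; exists c => //; rewrite mem_enum.
have Hbef : (i, true) \in take (index (j, true) (sort1 F avail0)) (sort1 F avail0).
  apply: (before (f := F) (avail := avail0)) => //.
    right; split => //=; last by apply: le_lt_trans Htp Hpij.
    by apply/mapP; exists i => //; rewrite mem_enum.
have Hidx := index_ltn Hbef.
have Hnot : (j, true) \notin take (index (i, true) (sort1 F avail0)).+1 (sort1 F avail0).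
  by rewrite in_take ?Hin // ltnS leqNgt Hidx.
rewrite !dd_eq ?take_uniq // (negbTE Hnot).
have := Ht i; have := Hp i; have := Ht j.
by case: ifP => _; case: ifP => _; case: ifP => _; move=> *; lra.
Qed.

End Sched.

Lemma imb_lem (R : realFieldType) (a b mu nu : R) : 0 <= a -> 0 <= b -> 1 < mu -> 0 < nu ->
  1 < mu * nu -> mu * Num.min a b <= Num.max a b -> nu * a <= b -> a <= b /\ mu * a <= b.
Proof.
move=> Ha Hb Hmu Hnu Hmn.
have [Hab|Hab] := lerP a b.
  by move=> H _; split.
move=> H1 H2.
exfalso.
have H3 : mu * (nu * a) <= mu * b by rewrite ler_pM2l //; lra.
have H4 : (mu * nu - 1) * a <= 0 by rewrite mulrBl mul1r -mulrA; lra.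
have H5 : a <= 0.
  by rewrite -(pmulr_rle0 _ (_ : 0 < mu * nu - 1)) // subr_gt0.
lra.
Qed.

Lemma arith (R : realFieldType) (D ti pi tj pj ms mu nu : R) :
  0 <= ti -> 0 <= tj -> mu * ti <= pi -> mu * tj <= pj ->
  nu * ms <= ti -> ti <= ms -> nu * ms <= tj -> tj <= ms -> pi <= pj ->
  1 < mu -> 0 < nu -> D <= ti + pi + tj ->
  D <= (1 + (nu * (mu + 1))^-1) * Num.min (ti + pi) (tj + pj).
Proof.
move=> Hti Htj Hpi Hpj H1 H2 H3 H4 Hp Hmu Hnu HD.
set c := (nu * (mu + 1))^-1.
have Kpos : 0 < nu * (mu + 1) by apply: mulr_gt0 => //; lra.
have Hc : c * (nu * (mu + 1)) = 1 by rewrite mulVf // gt_eqF.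
have cpos : 0 <= c by rewrite /c invr_ge0 ltW.
have B x y : x * (nu * (mu + 1)) <= y -> x <= c * y.
  move=> H; rewrite -[x]mul1r -Hc mulrC mulrA [_ * c]mulrC -mulrA.
  by rewrite ler_wpM2l // mulrC.
have G1 : tj <= c * (ti + pi).
  apply: B.
  have : nu * tj <= ti by apply: le_trans H1; rewrite ler_wpM2l // ltW.
  move=> E; nra.
have G2 : ti <= c * (tj + pj).
  apply: B.
  have : nu * ti <= tj by apply: le_trans H3; rewrite ler_wpM2l // ltW.
  move=> E; nra.
have [Hle|Hlt] := lerP (ti + pi) (tj + pj).
  rewrite mulrDl mul1r; lra.
rewrite mulrDl mul1r; lra.
Qed.

Unset Implicit Arguments.

Theorem mainTheorem10 (R : realFieldType) (n : nat) (t p : 'I_n -> R)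
  (mu nu : R) :
  (forall j, 0 <= t j) -> (forall j, 0 <= p j) ->
  general_position t p ->
  1 < mu -> 0 < nu -> nu < 1 -> 1 < mu * nu ->
  1 + mu^-1 <= nu + nu ^+ 2 ->
  forall i j k s : 'I_n,
    uniq [:: i; j; k; s] ->
    red_pair t p mu nu i k -> red_pair t p mu nu j k ->
    red_pair t p mu nu s i -> red_pair t p mu nu s j ->
    DD t p i j <= (1 + (nu * (mu + 1))^-1) * Dstar t p i j.
Proof.
move=> Ht Hp GP Hmu Hnu0 Hnu1 Hmn _ i j k s Hu [_ Hi _ _ _] [_ Hj _ _ _]
  [_ _ Hsi1 Hsi2 Hsi3] [_ _ Hsj1 Hsj2 Hsj3].
have [Ti Mi] := imb_lem (Ht i) (Hp i) Hmu Hnu0 Hmn Hi Hsi3.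
have [Tj Mj] := imb_lem (Ht j) (Hp j) Hmu Hnu0 Hmn Hj Hsj3.
have Hij : i != j by move: Hu; rewrite /= !inE negb_or => /andP [/andP [] ].
have Npij : p i != p j.
  have := GP i j (@Ordinal 3 1 isT) (@Ordinal 3 1 isT).
  by rewrite xpair_eqE negb_and Hij /=; apply.
rewrite /Dstar /sigma.
case: (ltgtP (p i) (p j)) => [Hlt|Hlt|E]; last by move: Npij; rewrite E eqxx.
  apply: (arith (ms := mj t p s)) => //; try exact: ltW.
  exact: key.
rewrite /DD addrC minC.
apply: (arith (ms := mj t p s)) => //; try exact: ltW.
exact: key.
Qed.
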